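(* Let $p$ be a prime, and let $e\ge 1$ and $k\ge 1$ be integers. Put $r=\gcd(k,e+1)$. Then $$\sigma_k(p^e)\equiv r\,\frac{p^{e+1}-1}{p^{r}-1}\pmod{\sigma(p^e)}.$$ Moreover, $\sigma(p^e)$ divides $\sigma_k(p^e)$ if and only if $r=1$.
   Context: For integers $k\ge 0$ and $n\ge 1$, $\sigma_k(n)=\sum_{d\mid n} d^k$, and $\sigma=\sigma_1$ is the sum-of-divisors function. *)

(* Defs.v *)
From mathcomp Require Import all_boot.
Set Implicit Arguments. Unset Strict Implicit. Unset Printing Implicit Defensive.

Definition sigmak (k n : nat) : nat := \sum_(d <- divisors n) d ^ k.
Definition sigma (n : nat) : nat := sigmak 1 n.

(* Main.v *)
Require Import Defs.
From mathcomp Require Import all_boot zify.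
Set Implicit Arguments. Unset Strict Implicit. Unset Printing Implicit Defensive.

Lemma sigmak_pe p e k : prime p ->
  sigmak k (p ^ e) = \sum_(i < e.+1) p ^ (i * k).
Proof.
move=> pp; have p1 : 1 < p by apply: prime_gt1.
rewrite /sigmak (perm_big [seq p ^ i | i <- iota 0 e.+1]).
  by rewrite big_map -(big_mkord xpredT (fun i => p ^ (i * k))) /index_iota subn0;
     apply: eq_bigr => i _; rewrite -expnM mulnC.
apply: uniq_perm; first exact: divisors_uniq.
  by rewrite map_inj_uniq ?iota_uniq //; apply: expnI.
move=> d; rewrite -dvdn_divisors ?expn_gt0 ?prime_gt0 //.
apply/dvdn_pfactor/mapP => // -[m].
  by move=> me ->; exists m => //; rewrite mem_iota; lia.
by rewrite mem_iota => me ->; exists m => //; lia.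
Qed.

Lemma geom x m : 0 < x -> (x - 1) * \sum_(j < m) x ^ j = x ^ m - 1.
Proof.
move=> x0; elim: m => [|m IH]; first by rewrite big_ord0 muln0.
rewrite big_ord_recr /= mulnDr IH expnS.
have : 0 < x ^ m by rewrite expn_gt0 x0.
move: (x ^ m) => y y0; rewrite mulnBl mul1n; nia.
Qed.

Lemma periodic_sum (F : nat -> nat) m a : (forall i, F (i + m) = F i) ->
  \sum_(0 <= i < a * m) F i = a * \sum_(0 <= i < m) F i.
Proof.
move=> Fp; elim: a => [|a IH]; first by rewrite !mul0n big_geq.
rewrite mulSn addnC (big_cat_nat _ (n := a * m)) ?leq_addr //= IH.
rewrite (big_addn 0 _ (a * m)) addKn.
rewrite addnC mulSn; congr (_ + _); apply: eq_bigr => i _.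
elim: a {IH} => [|a IH]; first by rewrite mul0n addn0.
by rewrite mulSnr addnA Fp.
Qed.

Lemma pow_mod p n S a : p ^ n = 1 %[mod S] -> p ^ a = p ^ (a %% n) %[mod S].
Proof.
move=> h; rewrite {1}(divn_eq a n) expnD (mulnC _ n) expnM -modnMml -modnXm h.
by rewrite modnXm exp1n modnMml mul1n.
Qed.

Lemma reindex_coprime (f : nat -> nat) k m : coprime k m ->
  \sum_(i < m) f ((i * k) %% m) = \sum_(i < m) f i.
Proof.
case: m => [|m] co; first by rewrite !big_ord0.
rewrite coprime_sym in co.
pose h (i : 'I_m.+1) := inord ((i * k) %% m.+1) : 'I_m.+1.
have hv i : nat_of_ord (h i) = (i * k) %% m.+1 by rewrite inordK // ltn_mod.
have hinj : injective h.
  move=> i j /(congr1 (@nat_of_ord _)); rewrite !hv => /eqP.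
  wlog ij : i j / j <= i.
    move=> W; case: (leqP j i) => ji; first exact: W.
    by move=> E; apply/esym/W => //; [exact: ltnW | rewrite eq_sym].
  rewrite eqn_mod_dvd ?leq_mul2r ?ij ?orbT // -mulnBl Gauss_dvdl // => d.
  apply: val_inj => /=; apply/eqP; rewrite eqn_leq ij andbT.
  case: (posnP (i - j)) => [|pos]; first lia.
  have := dvdn_leq pos d; have := ltn_ord i; clear; lia.
by rewrite [RHS](reindex_inj hinj); apply: eq_bigr => i _; rewrite hv.
Qed.

Lemma geo_lb p g : 1 < p -> 2 * g + 1 <= \sum_(j < g.+1) p ^ j.
Proof.
move=> p1; elim: g => [|g IH]; first by rewrite big_ord1.
rewrite big_ord_recr /=.
have : 2 <= p ^ g.+1 by rewrite expnS; have := expn_gt0 p g; rewrite (ltnW p1) /=; nia.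
move=> h2; apply: leq_trans (leq_add IH h2); lia.
Qed.

Theorem mainTheorem4 (p e k : nat) :
  prime p -> 1 <= e -> 1 <= k ->
  let r := gcdn k e.+1 in
  sigmak k (p ^ e) = r * ((p ^ e.+1 - 1) %/ (p ^ r - 1)) %[mod sigma (p ^ e)]
  /\ (sigma (p ^ e) %| sigmak k (p ^ e) <-> r = 1).
Proof.
move=> pp e1 k1 r.
have p1 : 1 < p by apply: prime_gt1.
have p0 : 0 < p by lia.
set n := e.+1.
have g0 : 0 < r by rewrite gcdn_gt0 k1.
set n' := n %/ r; set k' := k %/ r.
have hn : n = r * n' by rewrite mulnC divnK // dvdn_gcdr.
have hk : k = k' * r by rewrite divnK // dvdn_gcdl.
have co : coprime k' n'.
  have : gcdn k' n' * r == 1 * r.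
    by rewrite mul1n muln_gcdl -hk mulnC -hn.
  by rewrite eqn_pmul2r.
set S := sigma (p ^ e).
have hS : S = \sum_(i < n) p ^ i.
  by rewrite /S /sigma sigmak_pe //; apply: eq_bigr => i _; rewrite muln1.
have hS1 : (p - 1) * S = p ^ n - 1 by rewrite hS geom.
have pn1 : p ^ n = 1 %[mod S].
  have : 0 < p ^ n by rewrite expn_gt0 p0.
  move=> h; have -> : p ^ n = (p - 1) * S + 1 by rewrite hS1; lia.
  by rewrite modnMDl.
set T := \sum_(j < n') (p ^ r) ^ j.
have pr0 : 0 < p ^ r - 1.
  have : 1 < p ^ r by rewrite -{1}(expn0 p) ltn_exp2l.
  lia.
have hT1 : (p ^ r - 1) * T = p ^ n - 1 by rewrite geom ?expn_gt0 ?p0 // -expnM -hn.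
have hT : (p ^ n - 1) %/ (p ^ r - 1) = T by rewrite -hT1 mulKn.
rewrite hT.
have cong : sigmak k (p ^ e) = r * T %[mod S].
  rewrite sigmak_pe // -modn_summ.
  rewrite (eq_bigr (fun i : 'I_n => p ^ ((i * k) %% n) %% S)); last first.
    by move=> i _; apply: pow_mod.
  rewrite modn_summ; congr (_ %% _).
  rewrite -(big_mkord xpredT (fun i => p ^ ((i * k) %% n))) hn periodic_sum; last first.
    move=> i; congr (p ^ _); rewrite mulnDl.
    have -> : n' * k = k' * (r * n') by rewrite hk; nia.
    by rewrite addnC modnMDl.
  congr (_ * _); rewrite big_mkord /T -(reindex_coprime (fun j => (p ^ r) ^ j) co).
  apply: eq_bigr => i _; rewrite -expnM muln_modr -hn hk mulnA (mulnC _ k') mulnA.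
  by rewrite [k' * i * r]mulnC mulnA.
split => //.
set U := \sum_(j < r) p ^ j.
have hU : (p - 1) * U = p ^ r - 1 by rewrite geom.
have pn : 1 < p ^ n by rewrite -{1}(expn0 p) ltn_exp2l.
have T0 : 0 < T.
  rewrite lt0n; apply/eqP => T0; move: hT1; rewrite T0 muln0 => /esym/eqP.
  by rewrite subn_eq0 leqNgt pn.
have p10 : 0 < p - 1 by rewrite subn_gt0.
have hST : S = T * U.
  apply/eqP; rewrite -(@eqn_pmul2l (p - 1)) //.
  by rewrite hS1 -hT1 -hU -mulnA (mulnC U).
rewrite /dvdn cong -[_ == 0]/(S %| r * T) hST (mulnC r) dvdn_pmul2l //.
rewrite /U; have := g0; move: (r) => s; case: s => [|[|s]] // _.
  by rewrite big_ord1 expn0 dvdn1; split.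
split => // /dvdn_leq; rewrite ltn0Sn => /(_ isT); have := geo_lb s.+1 p1.
move: (\sum_(j < s.+2) p ^ j) => x; clear; lia.
Qed.
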